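(* Let $n_1,n_2,n_3$ be pairwise coprime positive integers forming a minimal system of generators of $\mathcal S=\langle n_1,n_2,n_3\rangle$, and let $\{i,j,k\}=\{1,2,3\}$. Put $\lambda_{ij}=[-n_in_j^{-1}]_{n_k}$ and $\lambda_{ik}=[-n_in_k^{-1}]_{n_j}$. Then $\lambda_{ij},\lambda_{ik}$ are positive integers and $$n_i=n_jn_k-\lambda_{ij}n_j-\lambda_{ik}n_k .$$
   Context: $\mathbb N$ denotes the nonnegative integers. For integers $a_1,\dots,a_r$, $\langle a_1,\dots,a_r\rangle=\{\sum t_la_l: t_l\in\mathbb N\}$. Minimal system of generators means that no $n_l$ belongs to the monoid generated by the other two. For an integer $m$ and $n\ge 1$, $[m]_n\in\{0,\dots,n-1\}$ denotes the remainder of $m$ upon division by $n$; for $a$ coprime to $n$, the symbol $a^{-1}$ inside $[\cdot]_n$ denotes a multiplicative inverse of $a$ modulo $n$ (the remainder does not depend on the choice). *)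

(* Defs.v *)
From HB Require Import structures.
From mathcomp Require Import all_boot all_order all_algebra.
Set Implicit Arguments. Unset Strict Implicit. Unset Printing Implicit Defensive.
Import Order.TTheory GRing.Theory Num.Theory.

Definition in_monoid2 (x a b : nat) : Prop :=
  exists t1 t2 : nat, x = t1 * a + t2 * b.

Definition minimal_gens3 (n : 'I_3 -> nat) : Prop :=
  forall i j k : 'I_3, i != j -> j != k -> i != k -> ~ in_monoid2 (n i) (n j) (n k).

(* Main.v *)
Require Import Defs.
From HB Require Import structures.
From mathcomp Require Import all_boot all_order all_algebra zify ring.
Import Order.TTheory GRing.Theory Num.Theory.
Local Open Scope ring_scope.
Lemma inv_rep (a b c : int) : (a * b = 1 %[mod c])%Z -> exists r, a * b = 1 + r * c.
Proof. move=> h. exists (divz (a*b) c - divz 1 c).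
have e1 := divz_eq (a*b) c. have e2 := divz_eq 1 c. rewrite h in e1.
move: e1 e2. set p := (_ %% c)%Z. set q := divz 1 c. set s := divz _ c. move=> e1 e2. nia. Qed.

Lemma nomon (x y z : nat) (t1 t2 : int) : 0 <= t1 -> 0 <= t2 ->
  x%:Z = t1 * y%:Z + t2 * z%:Z -> in_monoid2 x y z.
Proof.
move=> h1 h2 e; exists `|t1|%N, `|t2|%N.
have : Posz x = Posz (`|t1| * y + `|t2| * z)%N by rewrite PoszD !PoszM !gez0_abs.
by case.
Qed.

Theorem mainTheorem1 (n : 'I_3 -> nat)
  (hpos : forall l, (0 < n l)%N)
  (hcop : forall l m, l != m -> coprime (n l) (n m))
  (hmin : minimal_gens3 n)
  (i j k : 'I_3) (hij : i != j) (hjk : j != k) (hik : i != k)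
  (u v : int)
  (hu : (u * (n j)%:Z = 1 %[mod (n k)%:Z])%Z)
  (hv : (v * (n k)%:Z = 1 %[mod (n j)%:Z])%Z) :
  let lij := ((- (n i)%:Z * u) %% (n k)%:Z)%Z in
  let lik := ((- (n i)%:Z * v) %% (n j)%:Z)%Z in
  0 < lij /\ 0 < lik /\
  (n i)%:Z = (n j)%:Z * (n k)%:Z - lij * (n j)%:Z - lik * (n k)%:Z.
Proof.
move=> lij lik.
have hm := hmin i j k hij hjk hik.
have cjk : coprimez (n j) (n k) by rewrite coprimezE /=; exact: hcop.
have [r1 e1] := inv_rep _ _ _ hu.
have [r2 e2] := inv_rep _ _ _ hv.
have pi := hpos i; have pj := hpos j; have pk := hpos k.
move: cjk e1 e2.
have ea := divz_eq (- (n i)%:Z * u) (n k).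
have eb := divz_eq (- (n i)%:Z * v) (n j).
have ra : 0 <= lij < (n k)%:Z by rewrite /lij; lia.
have rb : 0 <= lik < (n j)%:Z by rewrite /lik; lia.
move: ea eb ra rb; rewrite -/lij -/lik.
set q1 := divz _ _; set q2 := divz _ _.
move: lij lik q1 q2 => a b q1 q2.
set ni := (n i)%:Z; set nj := (n j)%:Z; set nk := (n k)%:Z.
move=> ea eb ra rb cjk e1 e2.
have dk : (nk %| ni + a * nj + b * nk)%Z.
  apply/dvdzP; exists (- ni * r1 - q1 * nj + b).
  have ha : a = - ni * u - q1 * nk by rewrite ea; ring.
  apply/eqP; rewrite -subr_eq0.
  have -> : ni + a * nj + b * nk - (- ni * r1 - q1 * nj + b) * nk = ni * (1 + r1 * nk - u * nj) by rewrite ha; ring.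
  by rewrite -e1 subrr mulr0.
have dj : (nj %| ni + a * nj + b * nk)%Z.
  apply/dvdzP; exists (- ni * r2 - q2 * nk + a).
  have hb : b = - ni * v - q2 * nj by rewrite eb; ring.
  apply/eqP; rewrite -subr_eq0.
  have -> : ni + a * nj + b * nk - (- ni * r2 - q2 * nk + a) * nj = ni * (1 + r2 * nj - v * nk) by rewrite hb; ring.
  by rewrite -e2 subrr mulr0.
have : (nj * nk %| ni + a * nj + b * nk)%Z by rewrite Gauss_dvdz // dj dk.
case/dvdzP => m em.
have pi' : 0 < ni by rewrite /ni; lia.
have pj' : 0 < nj by rewrite /nj; lia.
have pk' : 0 < nk by rewrite /nk; lia.
have eni : ni = m * (nj * nk) - a * nj - b * nk by rewrite -em; ring.
have ge_a : 0 <= a * nj by apply: mulr_ge0; lia.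
have ge_b : 0 <= b * nk by apply: mulr_ge0; lia.
have m1 : 0 < m.
  have : 0 < m * (nj * nk) by rewrite -em; lia.
  by rewrite pmulr_lgt0 // mulr_gt0.
have mnj : nj <= m * nj by rewrite ler_pMl //; lia.
have mnk : nk <= m * nk by rewrite ler_pMl //; lia.
have a0 : 0 < a.
  case: (ltrP 0 a) => // ha; exfalso; apply: hm.
  have a0 : a = 0 by lia.
  apply: (@nomon _ _ _ 0 (m * nj - b)); [done| lia | rewrite -/ni -/nj -/nk eni a0; ring].
have b0 : 0 < b.
  case: (ltrP 0 b) => // hb; exfalso; apply: hm.
  have b0 : b = 0 by lia.
  apply: (@nomon _ _ _ (m * nk - a) 0); [lia| done | rewrite -/ni -/nj -/nk eni b0; ring].
have m2 : m = 1.
  case: (ltrP 1 m) => hm2; last by lia.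
  exfalso; apply: hm.
  have : nj <= (m - 1) * nj by rewrite ler_pMl //; lia.
  move=> h.
  apply: (@nomon _ _ _ (nk - a) ((m - 1) * nj - b)); [lia| lia | rewrite -/ni -/nj -/nk eni; ring].
split; [done|split; [done|]]. by rewrite m2 mul1r in eni.
Qed.
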